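(* Let $m\ge 2$ and $n_0\ge 1$. There exist $m+1$ $(Q_{n_0},Q_m)$-saturated graphs $A_1,\dots,A_{m+1}$ such that every $(m-1)$-dimensional subcube of $Q_{n_0}$ is contained in at least one $A_i$. (For instance, $A_i$ may be taken to be any $(Q_{n_0},Q_m)$-saturated graph containing all edges whose lower-weight endpoint has weight congruent modulo $m+1$ to one of $i,i+1,\dots,i+m-2$.)
   Context: $Q_n$ is the hypercube on $\{0,1\}^n$ with edges between vertices differing in exactly one coordinate. The weight of a vertex is its number of coordinates equal to $1$. A subcube of dimension $d$ is a set $\{x: x_j=a_j \ \forall j\in J\}$ with $|J|=n-d$, with its induced edges; a graph contains it if it contains all those edges. A graph $G$ is $(Q_n,Q_m)$-saturated if $G\subseteq Q_n$, $G$ contains no subgraph isomorphic to $Q_m$, and adding any edge of $E(Q_n)\setminus E(G)$ creates such a subgraph. *)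

(* Defs.v *)
From mathcomp Require Import all_boot.
Set Implicit Arguments. Unset Strict Implicit. Unset Printing Implicit Defensive.

Definition vert (n : nat) := {ffun 'I_n -> bool}.

Definition hadj (n : nat) (x y : vert n) : bool := #|[set i | x i != y i]| == 1.

Definition cube_edges (n : nat) : {set {set vert n}} :=
  [set [set x.1; x.2] | x in [set p : vert n * vert n | hadj p.1 p.2]].

Definition contains_Q (n m : nat) (G : {set {set vert n}}) : Prop :=
  exists f : vert m -> vert n, injective f /\
    forall u v : vert m, hadj u v -> [set f u; f v] \in G.

Definition saturated (n m : nat) (G : {set {set vert n}}) : Prop :=
  [/\ G \subset cube_edges n,
      ~ contains_Q m G &
      forall e, e \in cube_edges n -> e \notin G -> contains_Q m (e |: G)].

Definition contains_subcube (n : nat) (J : {set 'I_n}) (a : vert n)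
    (G : {set {set vert n}}) : Prop :=
  forall x y : vert n, hadj x y ->
    (forall j, j \in J -> x j = a j) -> (forall j, j \in J -> y j = a j) ->
    [set x; y] \in G.

(* Main.v *)
From Stdlib Require Import Classical IndefiniteDescription.
Require Import Defs.
From mathcomp Require Import all_boot zify.
Set Implicit Arguments. Unset Strict Implicit. Unset Printing Implicit Defensive.

Definition wt n (x : vert n) := #|[set k | x k]|.
Definition flip n (x : vert n) (k : 'I_n) : vert n :=
  [ffun j => if j == k then ~~ x j else x j].
Definition dset n (u x : vert n) := [set k | u k != x k].

Lemma card_flipP n (P : pred 'I_n) k :
  #|[set j | if j == k then ~~ P j else P j]| =
  if P k then #|[set j | P j]|.-1 else #|[set j | P j]|.+1.
Proof.
case Pk: (P k).
- have -> : [set j | if j == k then ~~ P j else P j] = [set j | P j] :\ k.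
    by apply/setP => j; rewrite !inE; case: eqP => [->|]; rewrite ?Pk.
  by rewrite (cardsD1 k [set j | P j]) inE Pk add1n.
- have -> : [set j | if j == k then ~~ P j else P j] = k |: [set j | P j].
    by apply/setP => j; rewrite !inE; case: eqP => [->|]; rewrite ?Pk.
  by rewrite cardsU1 inE Pk.
Qed.

Lemma wt_flip n (x : vert n) k :
  wt (flip x k) = if x k then (wt x).-1 else (wt x).+1.
Proof.
rewrite /wt (_ : [set j | flip x k j] = [set j | if j == k then ~~ x j else x j]).
  exact: (card_flipP (fun j => x j)).
by apply/setP => j; rewrite !inE ffunE.
Qed.

Lemma dset_flip n (u x : vert n) k :
  #|dset u (flip x k)| = if k \in dset u x then #|dset u x|.-1 else #|dset u x|.+1.
Proof.
rewrite /dset (_ : [set j | u j != flip x k j] =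
   [set j | if j == k then ~~ (u j != x j) else u j != x j]).
  by rewrite (card_flipP (fun j => u j != x j)) inE.
apply/setP => j; rewrite !inE ffunE; case: (j == k) => //.
by case: (u j); case: (x j).
Qed.

Lemma hadj_flip n (x y : vert n) : hadj x y -> exists k, y = flip x k.
Proof.
move=> /cards1P [k Hk]; exists k; apply/ffunP => j; rewrite ffunE.
case: eqP => [->|/eqP ne].
- have: k \in [set i | x i != y i] by rewrite Hk set11.
  by rewrite inE; case: (x k); case: (y k).
- have: j \notin [set i | x i != y i] by rewrite Hk inE.
  by rewrite inE negbK => /eqP ->.
Qed.

Lemma flip_hadj n (x : vert n) k : hadj x (flip x k).
Proof.
apply/cards1P; exists k; apply/setP => j; rewrite !inE ffunE.
by case: (j == k); case: (x j).
Qed.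

Lemma hadj_sym n (x y : vert n) : hadj x y = hadj y x.
Proof.
rewrite /hadj (_ : [set i | x i != y i] = [set i | y i != x i]) //.
by apply/setP => j; rewrite !inE eq_sym.
Qed.

Lemma flipK n (x : vert n) k : flip (flip x k) k = x.
Proof. by apply/ffunP => j; rewrite !ffunE; case: (j == k) => //; rewrite negbK. Qed.

Lemma flipC n (x : vert n) a b : flip (flip x a) b = flip (flip x b) a.
Proof. by apply/ffunP => j; rewrite !ffunE; case: (j == a); case: (j == b). Qed.

Lemma hadj_neq n (x y : vert n) : hadj x y -> x != y.
Proof.
apply: contraTneq => ->; rewrite /hadj.
rewrite (_ : [set i | y i != y i] = set0) ?cards0 //.
by apply/setP => j; rewrite !inE eqxx.
Qed.

Lemma wt_adj n (x y : vert n) : hadj x y -> wt y = (wt x).+1 \/ wt x = (wt y).+1.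
Proof.
case/hadj_flip => k ->; rewrite wt_flip.
case xk: (x k); [right | left] => //.
have: 0 < wt x by apply/card_gt0P; exists k; rewrite inE xk.
lia.
Qed.

Lemma L n (t x : vert n) a b : a != b -> t a = false -> t b = false ->
  hadj (flip t a) x -> hadj (flip t b) x -> x != t -> wt x = (wt t).+2.
Proof.
move=> ab ta tb /hadj_flip [c ->] h2 xt.
case: (c =P a) => [ca | /eqP ca].
  by subst c; rewrite flipK eqxx in xt.
have ba : (b == a) = false by rewrite eq_sym (negbTE ab).
case: (c =P b) => [cb | /eqP cb].
  by subst c; rewrite wt_flip !ffunE ba tb wt_flip ta.
exfalso; move: h2; apply/negP.
have ac : (a == c) = false by rewrite eq_sym (negbTE ca).
have bc : (b == c) = false by rewrite eq_sym (negbTE cb).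
have ab' : (a == b) = false := negbTE ab.
have sub : [set a; b] \subset [set i | flip t b i != flip (flip t a) c i].
  apply/subsetP => i; rewrite !inE => /orP [] /eqP ->; rewrite !ffunE.
  - by rewrite eqxx ab' ac; case: (t a).
  - by rewrite eqxx ba bc; case: (t b).
move/subset_leq_card: sub; rewrite cards2 ab /= /hadj => h.
by apply/eqP => h1; rewrite h1 in h.
Qed.

Lemma cube_dist n m (f : vert m -> vert n) (u0 : vert m) :
  injective f -> (forall u v, hadj u v -> hadj (f u) (f v)) ->
  (forall u, wt (f u0) <= wt (f u)) ->
  forall x, wt (f x) = wt (f u0) + #|dset u0 x|.
Proof.
move=> finj fhom fmin.
suff H : forall d x, #|dset u0 x| = d -> wt (f x) = wt (f u0) + d.
  by move=> x; exact: H.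
elim/ltn_ind => d IH x Hd.
case: d IH Hd => [|[|d]] IH Hd.
- have H0 : dset u0 x = set0 by apply/eqP; rewrite -cards_eq0 Hd.
  have -> : x = u0.
    apply/ffunP => j; have: j \notin dset u0 x by rewrite H0 in_set0.
    by rewrite inE negbK => /eqP.
  by rewrite addn0.
- have h : hadj u0 x by apply/eqP; exact Hd.
  case/hadj_flip: (fhom _ _ h) => k Hk.
  have := fmin x; rewrite Hk wt_flip.
  case fk: (f u0 k) => //; last by rewrite addn1.
  have: 0 < wt (f u0) by apply/card_gt0P; exists k; rewrite inE fk.
  lia.
- set D := dset u0 x.
  have [a aD] : exists a, a \in D by apply/card_gt0P; rewrite /D Hd.
  have [b bD'] : exists b, b \in D :\ a.
    apply/card_gt0P; move: Hd; rewrite (cardsD1 a D) aD /D; lia.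
  move: bD'; rewrite !inE => /andP [ba bD].
  have ba' : (b == a) = false by apply/negbTE.
  set y := flip x a; set y' := flip x b; set t := flip y b.
  have dy : #|dset u0 y| = d.+1 by rewrite dset_flip -/D aD Hd.
  have by_ : b \in dset u0 y by rewrite inE ffunE ba'.
  have dt : #|dset u0 t| = d by rewrite dset_flip by_ dy.
  have dy' : #|dset u0 y'| = d.+1 by rewrite dset_flip -/D inE bD Hd.
  have wy := IH _ (ltnSn _) _ dy.
  have wy' := IH _ (ltnSn _) _ dy'.
  have wt_ := IH _ (ltnW (ltnSn _)) _ dt.
  have ty : y = flip t b by rewrite /t flipK.
  have ty' : y' = flip t a by rewrite /t /y flipC flipK.
  case/hadj_flip: (fhom _ _ (flip_hadj t b)) => a' Ha'.
  case/hadj_flip: (fhom _ _ (flip_hadj t a)) => b' Hb'.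
  rewrite -ty in Ha'; rewrite -ty' in Hb'.
  have ta' : f t a' = false.
    move: wy; rewrite Ha' wt_flip wt_; case: (f t a') => //.
    have: 0 < wt (f u0) + d.+2 by lia. lia.
  have tb' : f t b' = false.
    move: wy'; rewrite Hb' wt_flip wt_; case: (f t b') => //. lia.
  have ab' : a' != b'.
    apply/eqP => e; subst b'.
    have : y = y' by apply: finj; rewrite Ha' Hb'.
    move/ffunP/(_ a); rewrite !ffunE eqxx (eq_sym a b) ba'.
    by case: (x a).
  have hx1 : hadj (f y) (f x) by apply: fhom; rewrite /y -{2}(flipK x a); exact: flip_hadj.
  have hx2 : hadj (f y') (f x) by apply: fhom; rewrite /y' -{2}(flipK x b); exact: flip_hadj.
  have xt : f x != f t.
    apply/eqP => /finj /ffunP /(_ a); rewrite !ffunE (eq_sym a b) ba' eqxx.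
    by case: (x a).
  rewrite Ha' in hx1; rewrite Hb' in hx2.
  rewrite (L ab' ta' tb' hx1 hx2 xt) wt_; lia.
Qed.

Definition good m (i : 'I_m.+1) k := (k + m.+1 - i) %% m.+1 < m.-1.

Definition Hg n m (i : 'I_m.+1) : {set {set vert n}} :=
  [set e in cube_edges n | [exists x : vert n, [exists y : vert n,
     [&& e == [set x; y], hadj x y, wt y == (wt x).+1 & good i (wt x)]]]].

Lemma pair_wt n (a b x y : vert n) : [set a; b] = [set x; y] ->
  wt b = (wt a).+1 -> wt y = (wt x).+1 -> wt x = wt a.
Proof.
move=> E hab hxy.
have hx : x \in [set a; b] by rewrite E set21.
have hy : y \in [set a; b] by rewrite E set22.
move: hx hy hxy; rewrite !inE => /orP [] /eqP -> /orP [] /eqP ->; lia.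
Qed.

Lemma nonmem n (D : {set 'I_n}) : #|D| < n -> exists k, k \notin D.
Proof.
move=> hD; have := cardsC D; rewrite card_ord => h.
have : 0 < #|~: D| by lia.
by case/card_gt0P => k; rewrite inE => hk; exists k.
Qed.

Lemma H_free n m (i : 'I_m.+1) : 1 <= m -> ~ contains_Q m (Hg n i).
Proof.
move=> m1 [f [finj fG]].
have fhom : forall u v, hadj u v -> hadj (f u) (f v).
  move=> u v huv; move: (fG _ _ huv); rewrite inE =>
    /andP [_ /existsP [x /existsP [y /and4P [/eqP E hxy _ _]]]].
  have neq : f u != f v by apply: contra (hadj_neq huv) => /eqP /finj ->.
  have hx : f u \in [set x; y] by rewrite -E set21.
  have hy : f v \in [set x; y] by rewrite -E set22.
  move: hx hy neq; rewrite !inE => /orP [] /eqP -> /orP [] /eqP ->;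
    rewrite ?eqxx // => _; by rewrite hadj_sym.
pose x0 : vert m := [ffun _ => false].
case: (@arg_minnP _ x0 predT (fun u => wt (f u)) isT) => u0 _ umin.
have umin' : forall u, wt (f u0) <= wt (f u) by move=> u; exact: umin.
have Hd := cube_dist finj fhom umin'.
set w0 := wt (f u0) in Hd.
have [j [jm hj]] : exists j, j < m /\ m.-1 <= (w0 + j + m.+1 - i) %% m.+1.
  have hi : i <= m := ltn_ord i.
  set s := (w0 + m.+1 - i) %% m.+1.
  have sm : s < m.+1 := ltn_pmod _ (ltn0Sn m).
  have E : forall j, (w0 + j + m.+1 - i) %% m.+1 = (s + j) %% m.+1.
    by move=> j; rewrite /s modnDml; congr (_ %% _); lia.
  case: (ltnP s m) => hs.
    exists (m.-1 - s); split; first lia.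
    rewrite E modn_small; lia.
  exists 0; split; first lia.
  rewrite E addn0 modn_small; lia.
have [v hv] : exists v : vert m, #|dset u0 v| = j.
  have : j <= m by lia.
  elim: j {jm hj} => [|j IH] hj.
    exists u0; apply/eqP; rewrite cards_eq0; apply/eqP/setP => k.
    by rewrite !inE eqxx.
  have [v hv] := IH (ltnW hj).
  have [k hk] : exists k, k \notin dset u0 v by apply: nonmem; rewrite hv.
  by exists (flip v k); rewrite dset_flip (negbTE hk) hv.
have [k hk] : exists k, k \notin dset u0 v by apply: nonmem; rewrite hv.
have hv' : #|dset u0 (flip v k)| = j.+1 by rewrite dset_flip (negbTE hk) hv.
move: (fG _ _ (flip_hadj v k)); rewrite inE =>
    /andP [_ /existsP [x /existsP [y /and4P [/eqP E _ /eqP hxy g]]]].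
have wv := Hd v; have wv' := Hd (flip v k).
rewrite hv in wv; rewrite hv' in wv'.
have := pair_wt E _ hxy; rewrite wv wv' => /(_ (addnS _ _)) hwx.
by move: g; rewrite /good hwx ltnNge hj.
Qed.

Lemma sat_ext n m (G : {set {set vert n}}) : G \subset cube_edges n -> ~ contains_Q m G ->
  exists A, saturated m A /\ G \subset A.
Proof.
suff : forall k (G : {set {set vert n}}), #|cube_edges n :\: G| = k -> G \subset cube_edges n ->
    ~ contains_Q m G -> exists A, saturated m A /\ G \subset A.
  by move=> H; exact: H _ G erefl.
elim/ltn_ind => k IH {}G hk hG hQ.
case: (classic (exists e, [/\ e \in cube_edges n, e \notin G &
                                ~ contains_Q m (e |: G)])).
- case=> e [he hne hQe].
  have pr : cube_edges n :\: (e |: G) \proper cube_edges n :\: G.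
    apply/properP; split.
      by apply/subsetP => z; rewrite !inE negb_or => /andP [/andP [_ ->] ->].
    by exists e; rewrite !inE ?eqxx ?hne ?he.
  have [A [sA sub]] := IH _ (ltac:(by rewrite -hk; exact: proper_card pr)) _ erefl
                         (ltac:(by rewrite subUset sub1set he hG)) hQe.
  exists A; split => //; exact: subset_trans (subsetUr _ _) sub.
- move=> hno; exists G; split => //; split => // e he hne.
  apply: NNPP => hc; apply: hno; by exists e.
Qed.

Lemma good_band m w k : w <= k -> k.+1 <= w + m.-1 ->
  good (Ordinal (ltn_pmod w (ltn0Sn m))) k.
Proof.
move=> h1 h2; rewrite /good /=.
set r := w %% m.+1; set q := w %/ m.+1.
have hw : w = q * m.+1 + r := divn_eq w m.+1.
have hr : r < m.+1 := ltn_pmod w (ltn0Sn m).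
have -> : k + m.+1 - r = q.+1 * m.+1 + (k - w).
  rewrite mulSnr; lia.
rewrite modnMDl modn_small; lia.
Qed.

Lemma band n (J : {set 'I_n}) (a z : vert n) :
  (forall j, j \in J -> z j = a j) ->
  #|[set j in J | a j]| <= wt z <= #|[set j in J | a j]| + (n - #|J|).
Proof.
move=> hz; rewrite /wt -(cardsID J [set k | z k]).
have -> : [set k | z k] :&: J = [set j in J | a j].
  apply/setP => j; rewrite !inE; case hj: (j \in J); rewrite ?andbT ?andbF //=.
  by rewrite (hz j hj).
have : #|[set k | z k] :\: J| <= #|~: J|.
  by apply: subset_leq_card; apply/subsetP => k; rewrite !inE => /andP [->].
have := cardsC J; rewrite card_ord.
move=> h1 h2; apply/andP; split; first exact: leq_addr.
have e : #|~: J| = n - #|J| by lia.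
by rewrite leq_add2l -e.
Qed.

Theorem mainTheorem5 (m n0 : nat) : 2 <= m -> 1 <= n0 ->
  exists A : 'I_m.+1 -> {set {set vert n0}},
    (forall i, saturated m (A i)) /\
    (forall (J : {set 'I_n0}) (a : vert n0),
        #|J| + (m - 1) = n0 -> exists i, contains_subcube J a (A i)).
Proof.
move=> m2 n1.
have ext : forall i : 'I_m.+1, exists A, saturated m A /\ Hg n0 i \subset A.
  move=> i; apply: sat_ext; last by apply: H_free; lia.
  by apply/subsetP => e; rewrite inE => /andP [].
exists (fun i => proj1_sig (constructive_indefinite_description _ (ext i))).
split.
  by move=> i; case: constructive_indefinite_description => A [].
move=> J a hJ.
set w := #|[set j in J | a j]|.
exists (Ordinal (ltn_pmod w (ltn0Sn m))).
case: constructive_indefinite_description => A [_ sub] /=.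
move=> x y hxy hx hy; apply: (subsetP sub).
have bx := band hx; have by_ := band hy.
rewrite inE; apply/andP; split.
  by apply/imsetP; exists (x, y); rewrite ?inE.
case: (wt_adj hxy) => hw.
- apply/existsP; exists x; apply/existsP; exists y.
  rewrite eqxx hxy hw eqxx /=; apply: good_band; lia.
- apply/existsP; exists y; apply/existsP; exists x.
  rewrite setUC eqxx hadj_sym hxy hw eqxx /=; apply: good_band; lia.
Qed.
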